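(* Assume the inverse Jacobian $J=\frac{d\mathbb P}{d(\mathbb P\circ T)}$ has a version which is continuous on $\Omega_S$. Let $\omega\in\Omega_{\mathbb P}$ be a periodic point with minimal period $r\ge1$. Then $\lim_{n\to\infty}\beta_{\omega,n}$ exists and equals $\prod_{j=0}^{r-1}J(T^j\omega)$ (with $J$ the continuous version).
   Context: Let $\mathcal A$ be a finite or countable set with $|\mathcal A|>1$, $\Omega=\mathcal A^{\mathbb N}$ with the product of discrete topologies, $\mathcal F$ the σ-algebra generated by coordinate projections, $T$ the left shift, and $\mathbb P$ a $T$-invariant ψ-mixing probability measure (there is $\psi_m\to0$ with $|\mathbb P(E\cap T^{-(n+m)}F)-\mathbb P(E)\mathbb P(F)|\le\psi_m\mathbb P(E)\mathbb P(F)$ for all $m,n$, $E\in\mathcal F_{\{0,\dots,n-1\}}$, $F\in\mathcal F$). Let $S=(S_{a,b})_{a,b\in\mathcal A}$ be a $0$–$1$ matrix with no zero rows or columns, $\Omega_S=\{\omega:S_{\omega_j,\omega_{j+1}}=1\ \forall j\ge0\}$ with the subspace topology, $\mathcal F_S=\{E\in\mathcal F:E\subset\Omega_S\}$; assume $\mathbb P(\Omega_S)=1$ and $T:\Omega_S\to\Omega_S$ is topologically mixing. For $E\in\mathcal F_S$ define $\mathbb P\circ T(E)=\sum_{a\in\mathcal A}\mathbb P(T(E\cap[a]))$; this is a σ-finite measure on $(\Omega_S,\mathcal F_S)$ with $\mathbb P\ll\mathbb P\circ T$, and the inverse Jacobian is $J=\frac{d\mathbb P}{d(\mathbb P\circ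 T)}$. Cylinders $[a_0,\dots,a_{n-1}]=\{\omega:\omega_j=a_j,0\le j<n\}$, $A_n^\omega=[\omega_0,\dots,\omega_{n-1}]$, $\Omega_{\mathbb P}=\{\omega:\mathbb P(A_n^\omega)>0\ \forall n\}$; $\omega$ periodic with minimal period $r$ means $r=\min\{j\ge1:T^j\omega=\omega\}<\infty$; $\beta_{\omega,n}=\mathbb P(A^\omega_{n+r}\mid A^\omega_n)$. *)

(* Defs.v *)
From mathcomp Require Import all_boot all_order all_algebra.
From mathcomp Require Import all_classical all_reals all_analysis.
Import Order.TTheory GRing.Theory Num.Theory.
Import numFieldNormedType.Exports.

Set Implicit Arguments.
Unset Strict Implicit.
Unset Printing Implicit Defensive.

Local Open Scope classical_set_scope.
Local Open Scope ring_scope.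

Section Defs.
Variable A : pointedType.

(* generators of the product sigma-algebra: coordinate cylinders {x | x i = a} *)
Definition coord_gen : set (set (nat -> A)) :=
  [set E | exists (i : nat) (a : A), E = [set x | x i = a]].

Definition Omega : measurableType (coord_gen.-sigma)%mdisp :=
  g_sigma_algebraType coord_gen.

Definition sshift (x : Omega) : Omega := fun n => x n.+1.

Definition cyl (x : Omega) (n : nat) : set Omega :=
  [set y | forall i, (i < n)%N -> y i = x i].

(* E belongs to F_{0,...,n-1}: E is determined by the first n coordinates *)
Definition depends_on_first (n : nat) (E : set Omega) : Prop :=
  forall x y : Omega, (forall i, (i < n)%N -> x i = y i) -> E x -> E y.

Definition Omega_S (S : A -> A -> bool) : set Omega :=
  [set x | forall j, S (x j) (x j.+1)].

(* U is open in Omega_S (subspace topology of the product of discrete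
   topologies, whose basis is the cylinders) *)
Definition open_in_S (S : A -> A -> bool) (U : set Omega) : Prop :=
  U `<=` Omega_S S /\
  forall x, U x -> exists n, cyl x n `&` Omega_S S `<=` U.

Definition top_mixing_S (S : A -> A -> bool) : Prop :=
  forall U V : set Omega, open_in_S S U -> open_in_S S V ->
    U !=set0 -> V !=set0 ->
    exists N : nat, forall n, (N <= n)%N ->
      ((iter n sshift) @^-1` U) `&` V !=set0.

Definition continuous_on_S {R : realType} (S : A -> A -> bool) (f : Omega -> R)
  : Prop :=
  forall x, Omega_S S x -> forall e : R, 0 < e ->
    exists n, forall y, Omega_S S y -> cyl x n y -> `|f y - f x| < e.

Context {R : realType}.

Definition shift_invariant (P : probability Omega R) : Prop :=
  forall E : set Omega, measurable E -> P (sshift @^-1` E) = P E.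

Definition psi_mixing (P : probability Omega R) : Prop :=
  exists psi : nat -> R, psi @ \oo --> (0 : R) /\
    forall (m n : nat) (E F : set Omega),
      measurable E -> depends_on_first n E -> measurable F ->
      (`| P (E `&` (iter (n + m) sshift) @^-1` F) - P E * P F |
         <= (psi m)%:E * P E * P F)%E.

(* mu coincides with P o T on F_S:
   (P o T)(E) = sum_a P(T(E cap [a])) *)
Definition is_PoT (P : probability Omega R) (S : A -> A -> bool)
  (mu : {measure set Omega -> \bar R}) : Prop :=
  forall E : set Omega, measurable E -> E `<=` Omega_S S ->
    mu E = \esum_(a in [set: A]) P (sshift @` (E `&` [set x | x 0%N = a])).

Definition is_inv_jacobian (P : probability Omega R) (S : A -> A -> bool)
  (mu : {measure set Omega -> \bar R}) (J : Omega -> R) : Prop :=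
  measurable_fun (Omega_S S) J /\
  (forall x, Omega_S S x -> 0 <= J x) /\
  forall E : set Omega, measurable E -> E `<=` Omega_S S ->
    P E = (\int[mu]_(x in E) (J x)%:E)%E.

Definition Omega_P (P : probability Omega R) : set Omega :=
  [set x | forall n, (0 < P (cyl x n))%E].

Definition cond_prob (P : probability Omega R) (B C : set Omega) : R :=
  fine (P (B `&` C)) / fine (P C).

Definition beta (P : probability Omega R) (w : Omega) (r n : nat) : R :=
  cond_prob P (cyl w (n + r)) (cyl w n).

End Defs.

Definition min_period (A : pointedType) (w : Omega A) (r : nat) : Prop :=
  (0 < r)%N /\ iter r (@sshift A) w = w /\
  forall j, (0 < j)%N -> (j < r)%N -> iter j (@sshift A) w <> w.

(* Main.v *)
Require Import Defs.
From mathcomp Require Import all_boot all_order all_algebra.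
From mathcomp Require Import all_classical all_reals all_analysis.
From mathcomp Require Import lra.
Import Order.TTheory GRing.Theory Num.Theory.
Import numFieldNormedType.Exports.
Local Open Scope classical_set_scope.
Local Open Scope ring_scope.

Section S.
Variable A : pointedType.
Implicit Types x : Omega A.

Lemma mcoord (i : nat) (a : A) : measurable [set x : Omega A | x i = a].
Proof. apply: sub_sigma_algebra; by exists i, a. Qed.

Definition D k (f : nat -> A) n : set (Omega A) :=
  [set y | forall i, (i < n)%N -> y (k + i)%N = f i].

Lemma mD k f n : measurable (D k f n).
Proof.
elim: n => [|n IH].
  have -> : D k f 0 = setT.
    by apply/seteqP; split=> // y _ i; rewrite ltn0.
  exact: (@measurableT _ (Omega A)).
rewrite (_ : D k f n.+1 = D k f n `&` [set x : Omega A | x (k+n)%N = f n]).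
  by apply: measurableI; [exact: IH|exact: mcoord].
apply/seteqP; split=> y /=.
  by move=> h; split=> [i hi|]; apply: h => //; apply: ltnW.
move=> [h1 h2] i; rewrite ltnS leq_eqVlt => /orP[/eqP->//|]; exact: h1.
Qed.

Lemma cylD x n : cyl x n = D 0 x n.
Proof. by apply/seteqP; split=> y /=; rewrite /cyl /D /=. Qed.

Lemma mcyl x n : measurable (cyl x n).
Proof. rewrite cylD; exact: mD. Qed.

Lemma shiftD k f n : (@sshift A) @^-1` D k f n = D k.+1 f n.
Proof.
apply/seteqP; split=> y /= h i hi.
  by rewrite addSn; exact: h.
by have := h i hi; rewrite addSn.
Qed.

Lemma mOS (S : A -> A -> bool) (hA : countable [set: A]) : measurable (Omega_S S).
Proof.
rewrite (_ : Omega_S S = \bigcap_j [set x : Omega A | S (x j) (x j.+1)]); last first.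
  apply/seteqP; split=> y h; first by move=> j _; exact: h.
  by move=> j; exact: h j I.
apply: bigcapT_measurable => j.
rewrite (_ : [set x : Omega A | S (x j) (x j.+1)] =
  \bigcup_(a : A) \bigcup_(b : A)
    ([set x : Omega A | x j = a] `&` [set x : Omega A | x j.+1 = b] `&` [set x : Omega A | S a b])); last first.
  apply/seteqP; split=> y /=.
    by move=> h; exists (y j) => //; exists (y j.+1).
  by move=> [a _ [b _ [[-> ->]]]].
apply: countable_bigcupT_measurable => // a.
apply: countable_bigcupT_measurable => // b.
apply: measurableI; first by apply: measurableI; exact: mcoord.
case: (S a b).
  by rewrite (_ : [set _ | _] = setT) //; apply/seteqP; split.
by rewrite (_ : [set _ | _] = set0) //; apply/seteqP; split.
Qed.

Lemma iter_shift k x i : iter k (@sshift A) x i = x (k + i)%N.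
Proof.
elim: k i => [|k IH] i //=.
by rewrite /sshift IH addnS addSn.
Qed.

Lemma OS_shift (S : A -> A -> bool) x : Omega_S S x -> Omega_S S (sshift x).
Proof. by move=> h j; exact: h. Qed.

Lemma OS_iter (S : A -> A -> bool) k x : Omega_S S x -> Omega_S S (iter k (@sshift A) x).
Proof. by elim: k => //= k IH h; apply: OS_shift; exact: IH. Qed.

Variable R : realType.
Variable P : probability (Omega A) R.

Lemma Pfin B : measurable B -> P B = (fine (P B))%:E.
Proof.
move=> mB; rewrite fineK // ge0_fin_numE //.
exact: (le_lt_trans (probability_le1 P mB) (ltry _)).
Qed.

Lemma PIS (S : A -> A -> bool) B : measurable (Omega_S S) -> P (Omega_S S) = 1%E ->
  measurable B -> P (B `&` Omega_S S) = P B.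
Proof.
move=> mS hS mB.
have h0 : P (B `\` Omega_S S) = 0%E.
  apply/eqP; rewrite eq_le measure_ge0 andbT.
  have <- : P (~` Omega_S S) = 0%E by rewrite probability_setC // hS subee.
  apply: le_measure; rewrite ?inE //=; try exact: measurableD;
    try exact: measurableC; try by move=> y [].
rewrite -[in RHS](setDUK (@subIsetl _ B (Omega_S S))).
rewrite measureU0 //; first exact: measurableI.
  by apply: measurableD => //; exact: measurableI.
rewrite -h0; congr (P _); apply/seteqP; split=> y /=.
  by move=> [hB hn]; split => // hS'; apply: hn.
by move=> [hB hn]; split => // -[].
Qed.

Lemma Pinv (hinv : shift_invariant P) k f n : P (D k f n) = P (D 0 f n).
Proof.
elim: k => // k IH; by rewrite -shiftD hinv ?IH //; exact: mD.
Qed.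

Lemma Ppos (hinv : shift_invariant P) w (hw : Omega_P P w) k n :
  (0 < P (cyl (iter k (@sshift A) w) n))%E.
Proof.
apply: (lt_le_trans (hw (k + n)%N)).
rewrite (cylD (iter k (@sshift A) w) n) -(Pinv hinv k).
apply: le_measure; rewrite ?inE; [apply: mcyl|apply: mD|].
move=> y hy i hi; rewrite iter_shift; apply: hy; by rewrite ltn_add2l.
Qed.

Lemma wOS (S : A -> A -> bool) (hA : countable [set: A]) (hPS : P (Omega_S S) = 1%E)
  w (hw : Omega_P P w) : Omega_S S w.
Proof.
move=> j; apply/negPn/negP => hn.
have := hw j.+2; rewrite -(PIS S _ (mOS S hA) hPS (mcyl w j.+2)).
suff -> : cyl w j.+2 `&` Omega_S S = set0 by rewrite measure0 ltxx.
apply/seteqP; split=> // y [hc hs]; move/negP: hn; apply.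
by have := hs j; rewrite (hc j) // (hc j.+1).
Qed.

Lemma muE (S : A -> A -> bool) (hA : countable [set: A]) (hPS : P (Omega_S S) = 1%E)
  (mu : {measure set (Omega A) -> \bar R}) (hmu : is_PoT P S mu)
  x n (hx : Omega_S S x) (hn : (0 < n)%N) :
  mu (cyl x n.+1 `&` Omega_S S) = P (cyl (sshift x) n).
Proof.
have mS := mOS S hA.
rewrite hmu; last 2 first.
- by apply: measurableI => //; exact: mcyl.
- exact: subIsetr.
have hE : forall a, P ((@sshift A) @` (cyl x n.+1 `&` Omega_S S `&` [set y | y 0%N = a])) =
   if a \in [set x 0%N] then P (cyl (sshift x) n) else 0%E.
  move=> a; case: ifPn => [/set_mem|/negP hne'].
  - move=> /= ->; rewrite -(PIS S _ mS hPS (mcyl (sshift x) n)); congr (P _).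
    apply/seteqP; split=> y.
      move=> [z [[hz1 hz2] hz3] <-]; split; last exact: OS_shift.
      by move=> i hi; apply: hz1.
    move=> [hy1 hy2].
    exists (fun i => if i is j.+1 then y j else x 0%N); last first.
      by apply: funext => i.
    split=> //; split.
      by case=> // i hi; rewrite hy1.
    case=> [|j] //=.
    rewrite (hy1 0%N hn); exact: hx 0%N.
  - have hne : a <> x 0%N by move=> e; apply: hne'; apply: mem_set.
    rewrite (_ : _ @` _ = set0) ?measure0 //.
    apply/seteqP; split=> // y [z [[hz1 _] hz3] _]; apply: hne.
    by rewrite -hz3 hz1.
rewrite (eq_esum (fun a _ => hE a)) -esum_mkcond esum_set1 //.
Qed.

Lemma qcvg (S : A -> A -> bool) (hA : countable [set: A]) (hPS : P (Omega_S S) = 1%E)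
  (mu : {measure set (Omega A) -> \bar R}) (hmu : is_PoT P S mu)
  (J : Omega A -> R) (hJ : is_inv_jacobian P S mu J) (hJc : continuous_on_S S J)
  x (hx : Omega_S S x) (hpos : forall n, (0 < P (cyl (sshift x) n))%E) :
  (fun n => fine (P (cyl x n.+1)) / fine (P (cyl (sshift x) n))) @ \oo --> J x.
Proof.
have mS := mOS S hA.
case: hJ => hJm [hJ0 hJi].
apply/cvgrPdist_lt => eps eps0.
have e0 : 0 < eps / 2 by rewrite divr_gt0.
have [N hN] := hJc x hx _ e0.
exists (maxn N 1) => // n /=; rewrite geq_max => /andP[hNn h1n].
set E := cyl x n.+1 `&` Omega_S S.
have mE : measurable E by apply: measurableI => //; exact: mcyl.
have hmuE := muE S hA hPS mu hmu x n hx h1n.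
set Dn := fine (P (cyl (sshift x) n)).
set V := fine (P (cyl x n.+1)).
have hDE : P (cyl (sshift x) n) = Dn%:E by rewrite /Dn -Pfin //; exact: mcyl.
have hVE : P (cyl x n.+1) = V%:E by rewrite /V -Pfin //; exact: mcyl.
have Dpos : 0 < Dn by rewrite -lte_fin -hDE.
have hPE : V%:E = (\int[mu]_(y in E) (J y)%:E)%E.
  by rewrite -hVE -hJi // ?PIS //; [exact: mcyl|exact: subIsetr].
have mJE : measurable_fun E J.
  apply: measurable_funS hJm => //; exact: subIsetr.
have hJy : forall y, E y -> `|J y - J x| < eps / 2.
  move=> y [hy1 hy2]; apply: hN => // i hi; apply: hy1.
  by apply: (leq_trans hi); apply: (leq_trans hNn).
have up : V <= (J x + eps / 2) * Dn.
  rewrite -lee_fin hPE EFinM -hDE -hmuE -integral_cst //.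
  apply: ge0_le_integral => //.
  all: try (by move=> y [_ hy]; rewrite lee_fin; apply: hJ0).
  all: try (exact/measurable_realfun.measurable_EFinP).
  all: try (exact: measurable_cst).
  move=> y hy; rewrite lee_fin /=.
    by have := hJy y hy; rewrite ltr_norml; move=> /andP[_ ?]; rewrite -lerBlDl ltW.
have lo : (J x - eps / 2) * Dn <= V.
  have [hle|hlt] := leP (J x - eps / 2) 0.
    apply: (le_trans (y := 0)); first by rewrite mulr_le0_ge0 // ltW.
    by rewrite /V fine_ge0 // measure_ge0.
  rewrite -lee_fin hPE EFinM -hDE -hmuE -integral_cst //.
  apply: ge0_le_integral => //.
  all: try (by move=> y _; rewrite lee_fin ltW).
  all: try (exact/measurable_realfun.measurable_EFinP).
  all: try (exact: measurable_cst).
  move=> y hy; rewrite lee_fin /=.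
    have := hJy y hy; rewrite ltr_norml => /andP[h _].
    lra.
have hq1 : V / Dn <= J x + eps / 2 by rewrite ler_pdivrMr.
have hq2 : J x - eps / 2 <= V / Dn by rewrite ler_pdivlMr.
rewrite ltr_norml; apply/andP; split; lra.
Qed.

End S.

Theorem theorem3 (R : realType) (A : pointedType)
  (hAcount : countable [set: A])
  (hA2 : exists a b : A, a <> b)
  (P : probability (Omega A) R)
  (hinv : shift_invariant P)
  (hpsi : psi_mixing P)
  (S : A -> A -> bool)
  (hrows : forall a, exists b, S a b)
  (hcols : forall b, exists a, S a b)
  (hPS : P (Omega_S S) = 1%E)
  (hmix : top_mixing_S S)
  (mu : {measure set (Omega A) -> \bar R})
  (hmu : is_PoT P S mu)
  (J : Omega A -> R)
  (hJ : is_inv_jacobian P S mu J)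
  (hJc : continuous_on_S S J)
  (w : Omega A) (hw : Omega_P P w)
  (r : nat) (hr : min_period w r) :
  beta P w r n @[n --> \oo] --> \prod_(j < r) J (iter j (@sshift A) w).
Proof.
have hwS := wOS A R P S hAcount hPS w hw.
pose p k m := fine (P (cyl (iter k (@sshift A) w) m)).
have ppos : forall k m, 0 < p k m.
  move=> k m; rewrite -lte_fin /p -Pfin; first exact: Ppos.
  exact: mcyl.
have qk : forall k, (fun n => p k n.+1 / p k.+1 n) @ \oo --> J (iter k (@sshift A) w).
  move=> k; apply: (qcvg A R P S hAcount hPS mu hmu J hJ hJc).
    exact: OS_iter.
  by move=> n; exact: (Ppos A R P hinv w hw k.+1 n).
have rat : forall k, (fun n => p 0%N (n + k)%N / p k n) @ \oo -->
    \prod_(j < k) J (iter j (@sshift A) w).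
  elim=> [|k IH].
    rewrite big_ord0.
    have -> : (fun n => p 0%N (n + 0)%N / p 0%N n) = (fun=> 1).
      by apply: funext => n; rewrite addn0 divff // gt_eqF.
    exact: cvg_cst.
  rewrite big_ord_recr /=.
  have -> : (fun n => p 0%N (n + k.+1)%N / p k.+1 n) =
     ((fun n => p 0%N (n.+1 + k)%N / p k n.+1) \* (fun n => p k n.+1 / p k.+1 n)).
    apply: funext => n /=; rewrite addSnnS.
    have h1 := ppos k n.+1; have h2 := ppos k.+1 n.
    by rewrite mulrA divfK // gt_eqF.
  apply: cvgM; last exact: qk.
  by rewrite (cvg_shiftS (fun n => p 0%N (n + k)%N / p k n)).
have -> : (fun n => beta P w r n) = (fun n => p 0%N (n + r)%N / p r n).
  apply: funext => n; rewrite /beta /cond_prob /p.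
  case: hr => _ [-> _] /=.
  rewrite setIidl // => y hy i hi; apply: hy.
  exact: (leq_trans hi (leq_addr _ _)).
exact: rat.
Qed.
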